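(* Let $N\ge1$, $T>0$ and $c\in(0,1]$. Let $\mathcal{A}^\ast=(a_1,a_2,\dots)$ and $\mathcal{B}^\ast=(b_1,b_2,\dots)$ be types (partitions of $N$) such that \[ |a_i-b_i|\le\frac{3N}{T}+\frac{a_i+b_i}{T^c}\quad\text{for all } i. \] Let $\mathcal{A}_0=\mathcal{A}^\ast,\mathcal{A}_1,\dots,\mathcal{A}_L$ be the types produced by the chopping procedure. Then for every $\ell\in[L]$ with $\ell\le(\log_2T)-2$, we have $\|\mathcal{A}_\ell-\mathcal{A}_{\ell-1}\|\le\frac{8N}{T^c}$.
   Context: A type is a list $(a_1,\dots,a_u)$ of positive integers with $a_1\ge\dots\ge a_u$ and $\sum a_i=N$, with the convention $a_i=0$ for $i>u$. A row-array is a list of $2N$ nonnegative integers $(a_1,\dots,a_{2N})$ (not necessarily sorted) with sum $N$; $\operatorname{type}(a_1,\dots,a_{2N})$ is the type obtained by sorting the nonzero entries in descending order. Every type is regarded as a row-array by padding with zeros. For types $\mathcal{A}=(a_i)$, $\mathcal{B}=(b_i)$ define $\|\mathcal{A}-\mathcal{B}\|:=\frac12\sum_{i=1}^N|a_i-b_i|$. Chopping procedure: let $L:=\lceil\log_2N\rceil$ and let $P$ be the least power of $2$ with $P\ge N$. Initialize the row-array $(a_1,\dots,a_{2N})$ to $\mathcal{A}^\ast$ and let $(b_1,\dots,b_{2N})$ be $\mathcal{B}^\ast$ (fixed throughout). For $\ell=1,\dots,L$: for every $i\in[2N]$ such that $a_i-b_i\ge P/2^\ell$ and $a_i>P/2^\ell$,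 set $a_i:=a_i-P/2^\ell$, then find some $j\in[2N]$ with $a_j=b_j=0$ and set $a_j:=P/2^\ell$; after processing all such $i$, set $\mathcal{A}_\ell:=\operatorname{type}(a_1,\dots,a_{2N})$. *)

(* Defs.v *)
From Stdlib Require Import Reals.
From mathcomp Require Import all_boot.

Set Implicit Arguments.
Unset Strict Implicit.
Unset Printing Implicit Defensive.

(* A type of N: a (finite) list of positive integers, weakly decreasing,
   with sum N.  Entries beyond the list are read as 0 via [nth 0]. *)
Definition is_type (N : nat) (s : seq nat) : bool :=
  [&& sorted geq s, all (fun x => 0 < x) s & sumn s == N].

Definition type_of (a : seq nat) : seq nat :=
  sort geq (filter (fun x => 0 < x) a).

Definition pad (N : nat) (s : seq nat) : seq nat :=
  s ++ nseq (2 * N - size s) 0.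

(* ||A - B|| := 1/2 * sum_{i=1}^N |a_i - b_i|  (0-based indices 0..N-1). *)
Definition type_dist (N : nat) (A B : seq nat) : R :=
  Rdiv (INR (\sum_(i < N) ((nth 0 A i - nth 0 B i) + (nth 0 B i - nth 0 A i)))) 2.

(* L := ceil(log2 N) (the smallest e with N <= 2^e), P := 2^L is the least
   power of 2 that is >= N; P / 2^l = 2^(L - l) for l <= L. *)
Definition chopL (N : nat) : nat := up_log 2 N.
Definition chopP (N : nat) : nat := 2 ^ chopL N.

(* The choice of j is nondeterministic, hence a relation.
   [pass s b i a a'] : processing indices i.. from array a yields a'. *)
Inductive pass (s : nat) (b : seq nat) : nat -> seq nat -> seq nat -> Prop :=
| pass_end i a : size a <= i -> pass s b i a a
| pass_skip i a a' :
    i < size a ->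
    ~~ ((nth 0 b i + s <= nth 0 a i) && (s < nth 0 a i)) ->
    pass s b i.+1 a a' -> pass s b i a a'
| pass_chop i j a a' :
    i < size a ->
    (nth 0 b i + s <= nth 0 a i) && (s < nth 0 a i) ->
    let a1 := set_nth 0 a i (nth 0 a i - s) in
    j < size a ->
    nth 0 a1 j = 0 -> nth 0 b j = 0 ->
    pass s b i.+1 (set_nth 0 a1 j s) a' -> pass s b i a a'.

(* [arr l] is the row-array after round l of a run of the chopping procedure
   started from A* against B*; A_l := type_of (arr l). *)
Definition chopping_run (N : nat) (Astar Bstar : seq nat) (arr : nat -> seq nat) : Prop :=
  arr 0 = pad N Astar /\
  forall l, 1 <= l <= chopL N ->
    pass (chopP N %/ 2 ^ l) (pad N Bstar) 0 (arr l.-1) (arr l).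

(* Main.v *)
Require Import Defs.
From Stdlib Require Import Reals Lia Lra.
From mathcomp Require Import all_boot.
From mathcomp Require Import zify.

Set Implicit Arguments.
Unset Strict Implicit.

Definition ad (x y : nat) : nat := (x - y) + (y - x).

Lemma set_sum (F : nat -> nat -> nat) (a : seq nat) p v K : p < K ->
  \sum_(i < K) F i (nth 0 (set_nth 0 a p v) i) + F p (nth 0 a p) =
  \sum_(i < K) F i (nth 0 a i) + F p v.
Proof.
move=> Hp.
rewrite (bigD1 (Ordinal Hp)) //= [in RHS](bigD1 (Ordinal Hp)) //= nth_set_nth /= eqxx.
rewrite (eq_bigr (fun i : 'I_K => F i (nth 0 a i))); first by lia.
move=> i Hi; rewrite nth_set_nth /=.
have -> : (i == p :> nat) = false.
  by apply/negbTE; move: Hi; apply: contra => /eqP Hi; apply/eqP; apply: val_inj.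
done.
Qed.

Lemma sum_from (f : nat -> nat) p K : p < K ->
  \sum_(i < K) (p <= i) * f i = f p + \sum_(i < K) (p.+1 <= i) * f i.
Proof.
move=> Hp.
rewrite (bigD1 (Ordinal Hp)) //= [in RHS](bigD1 (Ordinal Hp)) //= leqnn ltnn mul1n mul0n add0n.
congr (_ + _); apply: eq_bigr => i Hi.
have Hne : (i : nat) != p.
  by move: Hi; apply: contra => /eqP Hi; apply/eqP; apply: val_inj.
by rewrite leq_eqVlt eq_sym (negbTE Hne).
Qed.

Lemma count_nth_sum (f : pred nat) x K : ~~ f 0 -> size x <= K ->
  count f x = \sum_(k < K) f (nth 0 x k).
Proof.
move=> Hf; elim: x K => [|z x IH] K /=.
  by move=> _; rewrite big1 // => k _; rewrite nth_nil (negbTE Hf).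
case: K => // K HK; rewrite big_ord_recl /= (IH K HK).
by [] .
Qed.

Lemma sum_nth_le x K : \sum_(k < K) nth 0 x k <= sumn x.
Proof.
elim: x K => [|z x IH] K /=.
  by rewrite big1 // => k _; rewrite nth_nil.
case: K => [|K]; first by rewrite big_ord0.
rewrite big_ord_recl /=.
by rewrite leq_add2l; exact: IH.
Qed.

Lemma sum_between u v M : \sum_(t < M) (v <= t < u) = minn u M - minn v M.
Proof.
elim: M => [|M IH]; first by rewrite big_ord0 !minn0.
rewrite big_ord_recr /= IH.
case: (leqP v M) => H1; case: (ltnP M u) => H2 /=; lia.
Qed.

Lemma ad_layer u v M : u <= M -> v <= M ->
  ad u v = \sum_(t < M) ((t < u) != (t < v)).
Proof.
move=> Hu Hv.
rewrite (eq_bigr (fun t : 'I_M => (v <= t < u) + (u <= t < v))); last first.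
  move=> t _; case: (ltnP t u) => H1; case: (ltnP t v) => H2 //=.
rewrite big_split /= !sum_between /ad; lia.
Qed.

Lemma ad_add a b c d : ad (a + b) (c + d) <= ad a c + ad b d.
Proof. rewrite /ad; lia. Qed.

Lemma ad_sum K (f g : nat -> nat) :
  ad (\sum_(k < K) f k) (\sum_(k < K) g k) <= \sum_(k < K) ad (f k) (g k).
Proof.
elim: K => [|K IH]; first by rewrite !big_ord0.
rewrite !big_ord_recr /=; apply: leq_trans (ad_add _ _ _ _) _.
by rewrite leq_add2r.
Qed.

Lemma mem_le_sumn z x : z \in x -> z <= sumn x.
Proof.
elim: x => [|y x IH] //=; rewrite in_cons => /orP [/eqP -> | H].
  exact: leq_addr.
by apply: leq_trans (IH H) _; exact: leq_addl.
Qed.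

Lemma sorted_nth_gt t p i : sorted geq p ->
  (t < nth 0 p i) = (i < count (fun z => t < z) p).
Proof.
elim: p i => [|z r IH] i /=; first by rewrite nth_nil.
move=> Hp.
have Hall : all (fun y => y <= z) r.
  have := order_path_min (leT := geq) _ Hp.
  by apply; move=> x y w /= H1 H2; apply: leq_trans H2 H1.
have Hr : sorted geq r by exact: path_sorted Hp.
case: (ltnP t z) => Htz /=.
  by case: i => [|i] //=; rewrite IH.
have Hc : count (fun z0 => t < z0) r = 0.
  apply/eqP; rewrite -leqn0 leqNgt -has_count; apply/hasPn => y Hy.
  move/allP: Hall => /(_ y Hy) Hyz; rewrite -leqNgt; exact: leq_trans Hyz Htz.
rewrite Hc; case: i => [|i] /=; first by rewrite ltnNge Htz.
case: (ltnP i (size r)) => Hi.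
  move/allP: Hall => /(_ _ (mem_nth 0 Hi)) Hyz.
  by rewrite ltnNge (leq_trans Hyz Htz).
by rewrite nth_default.
Qed.

Lemma count_type t x : count (fun z => t < z) (type_of x) = count (fun z => t < z) x.
Proof.
rewrite /type_of count_sort count_filter; apply: eq_count => z /=.
by apply/andb_idr => H; apply: leq_ltn_trans H.
Qed.

Lemma type_sorted x : sorted geq (type_of x).
Proof. apply: sort_sorted => m n; exact: leq_total. Qed.

Lemma type_le x i : nth 0 (type_of x) i <= sumn x.
Proof.
case: (ltnP i (size (type_of x))) => Hi; last by rewrite nth_default.
apply: mem_le_sumn.
have := mem_nth 0 Hi; rewrite /type_of mem_sort mem_filter.
by case/andP.
Qed.

Lemma nth_le x k : nth 0 x k <= sumn x.
Proof.
case: (ltnP k (size x)) => Hk; last by rewrite nth_default.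
exact: mem_le_sumn (mem_nth 0 Hk).
Qed.

Lemma rearr N K x y : size x <= K -> size y <= K ->
  \sum_(i < N) ad (nth 0 (type_of x) i) (nth 0 (type_of y) i) <=
  \sum_(k < K) ad (nth 0 x k) (nth 0 y k).
Proof.
move=> Hx Hy.
set M := sumn x + sumn y.
have Hpx i : nth 0 (type_of x) i <= M by apply: leq_trans (type_le x i) (leq_addr _ _).
have Hpy i : nth 0 (type_of y) i <= M by apply: leq_trans (type_le y i) (leq_addl _ _).
have Hxx k : nth 0 x k <= M by apply: leq_trans (nth_le x k) (leq_addr _ _).
have Hyy k : nth 0 y k <= M by apply: leq_trans (nth_le y k) (leq_addl _ _).
rewrite (eq_bigr (fun i : 'I_N => \sum_(t < M) ((t < nth 0 (type_of x) i) != (t < nth 0 (type_of y) i)))); last first.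
  by move=> i _; apply: ad_layer.
rewrite [X in _ <= X](eq_bigr (fun k : 'I_K => \sum_(t < M) ((t < nth 0 x k) != (t < nth 0 y k)))); last first.
  by move=> k _; apply: ad_layer.
rewrite exchange_big [X in _ <= X]exchange_big /=.
apply: leq_sum => t _.
rewrite (eq_bigr (fun i : 'I_N => (count (fun z => t < z) x <= i < count (fun z => t < z) y)
         + (count (fun z => t < z) y <= i < count (fun z => t < z) x))); last first.
  move=> i _; rewrite !sorted_nth_gt ?type_sorted // !count_type.
  by case: (ltnP i (count (fun z => t < z) x)) => H1; case: (ltnP i (count (fun z => t < z) y)) => H2.
rewrite big_split /= !sum_between.
have := ad_sum K (fun k => t < nth 0 x k) (fun k => t < nth 0 y k).
rewrite -!count_nth_sum //.
move=> H.
have E : \sum_(k<K) ad (t < nth 0 x k) (t < nth 0 y k) = \sum_(k<K) ((t< nth 0 x k) != (t < nth 0 y k)).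
  by apply: eq_bigr => k _; case: (t < nth 0 x k); case: (t < nth 0 y k).
rewrite -E; apply: leq_trans H; rewrite /ad.
have -> : count [eta leq t.+1] y = count (leq t.+1) y by [].
have -> : count [eta leq t.+1] x = count (leq t.+1) x by [].
lia.
Qed.

Definition inW (sst : nat) (a0 b : seq nat) (i : nat) : bool :=
  (sst + nth 0 b i <= nth 0 a0 i) || ((nth 0 a0 i == 0) && (nth 0 b i == 0)).
Definition Wsum sst a0 b K a := \sum_(i < K) inW sst a0 b i * (nth 0 a i - nth 0 b i).
Definition Inv sst a0 b K a := size a = K /\
  (forall i, ~~ inW sst a0 b i -> nth 0 a i = nth 0 a0 i) /\
  Wsum sst a0 b K a = Wsum sst a0 b K a0.
Definition cc s (x y : nat) : bool := (y + s <= x) && (s < x).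
Definition Psi sst a0 b K s p a := \sum_(i < K) (p <= i) *
  (inW sst a0 b i * (cc s (nth 0 a i) (nth 0 b i) * (nth 0 a i - nth 0 b i))).
Definition L1 K x y := \sum_(i < K) ad (nth 0 x i) (nth 0 y i).

Lemma chop_facts sst a0 b K s a p j : sst <= s -> Inv sst a0 b K a ->
  cc s (nth 0 a p) (nth 0 b p) ->
  nth 0 (set_nth 0 a p (nth 0 a p - s)) j = 0 -> nth 0 b j = 0 ->
  [/\ inW sst a0 b p, inW sst a0 b j, j != p & nth 0 a j = 0].
Proof.
move=> Hs [Hsz [Hun Hsum]] /andP[H1 H2] Hj Hbj.
have Hjp : j != p.
  apply/negP => /eqP E; move: Hj; rewrite E nth_set_nth /= eqxx; lia.
have Haj : nth 0 a j = 0 by move: Hj; rewrite nth_set_nth /= (negbTE Hjp).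
split => //.
  case Hw: (inW sst a0 b p) => //; have E := Hun p (negbT Hw).
  move: Hw; rewrite /inW -E.
  have -> : sst + nth 0 b p <= nth 0 a p by lia.
  by [].
case Hw: (inW sst a0 b j) => //; have E := Hun j (negbT Hw).
by move: Hw; rewrite /inW -E Haj Hbj /= orbT.
Qed.

Lemma chop_inv sst a0 b K s a p j : sst <= s -> Inv sst a0 b K a ->
  p < size a -> cc s (nth 0 a p) (nth 0 b p) -> j < size a ->
  nth 0 (set_nth 0 a p (nth 0 a p - s)) j = 0 -> nth 0 b j = 0 ->
  Inv sst a0 b K (set_nth 0 (set_nth 0 a p (nth 0 a p - s)) j s).
Proof.
move=> Hs HI Hp Hc Hj Hj0 Hbj.
have [Wp Wj Hjp Haj] := chop_facts Hs HI Hc Hj0 Hbj.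
case: HI => [Hsz [Hun Hsum]].
move: (Hc) => /andP [H1 H2].
rewrite Hsz in Hp Hj.
set a1 := set_nth 0 a p (nth 0 a p - s).
have S1 : Wsum sst a0 b K a1 + inW sst a0 b p * (nth 0 a p - nth 0 b p) =
   Wsum sst a0 b K a + inW sst a0 b p * ((nth 0 a p - s) - nth 0 b p)
  := set_sum (fun i x => inW sst a0 b i * (x - nth 0 b i)) a (nth 0 a p - s) Hp.
have S2 : Wsum sst a0 b K (set_nth 0 a1 j s) + inW sst a0 b j * (nth 0 a1 j - nth 0 b j) =
   Wsum sst a0 b K a1 + inW sst a0 b j * (s - nth 0 b j)
  := set_sum (fun i x => inW sst a0 b i * (x - nth 0 b i)) a1 s Hj.
rewrite Wp Wj Hj0 Hbj !mul1n in S1 S2.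
split; [|split].
- rewrite !size_set_nth Hsz; lia.
- move=> i Hi; rewrite !nth_set_nth /=.
  have -> : (i == j) = false by apply/negbTE; apply: contraNneq Hi => ->.
  rewrite /a1 nth_set_nth /=; have -> : (i == p) = false by apply/negbTE; apply: contraNneq Hi => ->.
  exact: Hun.
- lia.
Qed.

Lemma pass_inv sst a0 b K s p a a' : pass s b p a a' -> sst <= s ->
  Inv sst a0 b K a -> Inv sst a0 b K a'.
Proof.
elim => {p a a'} [i a _ | i a a' _ _ _ IH | i j a a' Hi Hc a1 Hj Hj0 Hbj _ IH] Hs HI //.
  exact: IH.
apply: IH => //; exact: chop_inv.
Qed.

Lemma ad_tri x y z : ad x z <= ad x y + ad y z.
Proof. rewrite /ad; lia. Qed.

Lemma L1_tri K x y z : L1 K x z <= L1 K x y + L1 K y z.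
Proof. rewrite /L1 -big_split; apply: leq_sum => i _; exact: ad_tri. Qed.

Lemma L1_refl K x : L1 K x x = 0.
Proof. by rewrite /L1 big1 // => i _; rewrite /ad subnn. Qed.

Lemma Psi_mono sst a0 b K s p a : Psi sst a0 b K s p.+1 a <= Psi sst a0 b K s p a.
Proof.
apply: leq_sum => i _; apply: leq_mul => //.
by case: (ltnP p i) => H //=; rewrite (ltnW H).
Qed.

Lemma pass_L1 sst a0 b K s p a a' : pass s b p a a' -> sst <= s ->
  Inv sst a0 b K a -> L1 K a a' <= 2 * Psi sst a0 b K s p a.
Proof.
elim => {p a a'} [i a _ | i a a' _ _ _ IH | i j a a' Hi Hc a1 Hj Hj0 Hbj Hpass IH] Hs HI.
- by rewrite L1_refl.
- by apply: leq_trans (IH Hs HI) _; rewrite leq_mul2l Psi_mono orbT.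
have [Wp Wj Hjp Haj] := chop_facts Hs HI Hc Hj0 Hbj.
have HI2 := chop_inv Hs HI Hi Hc Hj Hj0 Hbj.
have IH2 := IH Hs HI2.
case: (HI) => [Hsz _].
move: (Hc) => /andP [H1 H2].
rewrite Hsz in Hi Hj.
set a2 := set_nth 0 a1 j s.
fold a2 in IH2.
have L1a : L1 K a a1 + ad (nth 0 a i) (nth 0 a i) = L1 K a a + ad (nth 0 a i) (nth 0 a i - s)
  := set_sum (fun k x => ad (nth 0 a k) x) a (nth 0 a i - s) Hi.
have L1b : L1 K a1 a2 + ad (nth 0 a1 j) (nth 0 a1 j) = L1 K a1 a1 + ad (nth 0 a1 j) s
  := set_sum (fun k x => ad (nth 0 a1 k) x) a1 s Hj.
rewrite !L1_refl Hj0 in L1a L1b.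
have Pa : Psi sst a0 b K s i.+1 a1 + 0 = Psi sst a0 b K s i.+1 a + 0.
  have := set_sum (fun k x => (i.+1 <= k) * (inW sst a0 b k * (cc s x (nth 0 b k) * (x - nth 0 b k)))) a (nth 0 a i - s) Hi.
  by rewrite ltnn !mul0n.
have Pb : Psi sst a0 b K s i.+1 a2 + 0 = Psi sst a0 b K s i.+1 a1 + 0.
  have := set_sum (fun k x => (i.+1 <= k) * (inW sst a0 b k * (cc s x (nth 0 b k) * (x - nth 0 b k)))) a1 s Hj.
  by rewrite Hj0 Hbj /cc /= ltnn andbF !mul0n !muln0.
have Pc := sum_from (fun k => inW sst a0 b k * (cc s (nth 0 a k) (nth 0 b k) * (nth 0 a k - nth 0 b k))) Hi.
have Hcc : cc s (nth 0 a i) (nth 0 b i) := Hc.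
rewrite /= Wp Hcc !mul1n in Pc.
have T1 := L1_tri K a a1 a2.
have T2 := L1_tri K a a2 a'.
rewrite /Psi Pc -/(Psi sst a0 b K s i.+1 a).
move: Pa Pb IH2 T1 T2 L1a L1b; rewrite /ad.
rewrite -/(Psi sst a0 b K s i.+1 a).
lia.
Qed.

Lemma Psi_le_W sst a0 b K s a : Psi sst a0 b K s 0 a <= Wsum sst a0 b K a.
Proof.
apply: leq_sum => i _; rewrite mul1n.
case: (inW sst a0 b i); rewrite ?mul0n ?mul1n //.
by case: (cc _ _ _); rewrite ?mul0n ?mul1n.
Qed.

Open Scope R_scope.

Lemma INR_le (m n : nat) : (m <= n)%N -> (INR m <= INR n).
Proof. by move/leP; apply: le_INR. Qed.

Lemma INR_expn2 n : INR (2 ^ n)%N = (2 ^ n).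
Proof.
elim: n => [|n IH]; first by rewrite expn0 /=.
rewrite expnS mult_INR IH /=; lra.
Qed.

Lemma real_sum K (f g : nat -> nat) (C : R) : (0 < C) ->
  (forall i, INR (f i) * C <= 4 * INR (g i)) ->
  (INR (\sum_(i < K) f i)%N * C <= 4 * INR (\sum_(i < K) g i)%N).
Proof.
move=> HC Hfg; elim: K => [|K IH]; first by rewrite !big_ord0 /=; lra.
have Ef : (\sum_(i < K.+1) f i = \sum_(i < K) f i + f K)%N by rewrite big_ord_recr.
have Eg : (\sum_(i < K.+1) g i = \sum_(i < K) g i + g K)%N by rewrite big_ord_recr.
rewrite Ef Eg !plus_INR Rmult_plus_distr_r.
have := Hfg K; lra.
Qed.

Lemma term_bound (a b s N : nat) (T C : R) : (0 < T) -> (0 < C) ->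
  (4 * INR N <= INR s * T) ->
  (Rabs (INR a - INR b) <= 3 * INR N / T + (INR a + INR b) / C) ->
  (INR ((s + b <= a) * (a - b))%N * C <= 4 * INR (a + b)).
Proof.
move=> HT HC Hs Hab.
case: (leqP (s + b) a) => H; last first.
  rewrite mul0n /= Rmult_0_l plus_INR; have := pos_INR a; have := pos_INR b; lra.
rewrite mul1n minus_INR; last by apply/leP; lia.
rewrite plus_INR.
have Hsb : (INR s <= INR a - INR b).
  have := INR_le H; rewrite plus_INR; lra.
have Habs : (INR a - INR b <= 3 * INR N / T + (INR a + INR b) / C).
  by apply: Rle_trans Hab; apply: Rle_abs.
set x := (INR N / T) in Habs.
set y := ((INR a + INR b) / C) in Habs.
have Hx : (x * T = INR N) by rewrite /x; field; lra.
have Hy : (y * C = INR a + INR b) by rewrite /y; field; lra.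
have Hx4 : (4 * x <= INR s).
  apply: (Rmult_le_reg_r T) => //; nra.
have E3 : 3 * INR N / T = 3 * x by rewrite /x; field; lra.
have Hd : (INR a - INR b <= 4 * y) by lra.
nra.
Qed.

Lemma two_pow_le (l : nat) (T : R) : (0 < T) ->
  (INR l <= ln T / ln 2 - 2) -> (2 ^ l * 4 <= T).
Proof.
move=> HT H.
have Hl2 : (0 < ln 2) by have := ln_lt_2; lra.
have H1 : (INR (l + 2)%N * ln 2 <= ln T).
  rewrite plus_INR /=.
  have : ((INR l + 2) <= ln T / ln 2) by lra.
  move=> H'; have := Rmult_le_compat_r (ln 2) _ _ (Rlt_le _ _ Hl2) H'.
  have -> : (ln T / ln 2 * ln 2 = ln T) by field; lra.
  lra.
rewrite -ln_pow in H1; last lra.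
have -> : (2 ^ l * 4 = 2 ^ (l + 2)) by rewrite pow_add /=; ring.
case: (Rle_lt_dec (2 ^ (l + 2)) T) => // Hlt.
have := ln_increasing _ _ HT Hlt; lra.
Qed.

Lemma nth_pad N s i : nth 0%N (pad N s) i = nth 0%N s i.
Proof.
rewrite /pad nth_cat; case: ltnP => H //.
by rewrite nth_nseq if_same nth_default.
Qed.

Theorem lemma14 (N : nat) (T c : R) (Astar Bstar : seq nat) (arr : nat -> seq nat) :
  (1 <= N)%N -> 0 < T -> 0 < c <= 1 ->
  is_type N Astar -> is_type N Bstar ->
  (forall i : nat,
     Rabs (INR (nth 0%N Astar i) - INR (nth 0%N Bstar i))
      <= 3 * INR N / T + (INR (nth 0%N Astar i) + INR (nth 0%N Bstar i)) / Rpower T c) ->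
  chopping_run N Astar Bstar arr ->
  forall l : nat, (1 <= l <= chopL N)%N ->
    INR l <= ln T / ln 2 - 2 ->
    type_dist N (type_of (arr l)) (type_of (arr l.-1)) <= 8 * INR N / Rpower T c.
Proof.
move=> HN HT Hc HA HB Hab [H0 Hrun] l Hl HlT.
move: (Hl) => /andP [Hl1 HlL].
set sst := (chopP N %/ 2 ^ l)%N.
set b := pad N Bstar.
set a0 := arr 0%N.
set K := size a0.
have Hsst : forall k, (k <= l)%N -> (sst <= chopP N %/ 2 ^ k)%N.
  move=> k Hk; rewrite /sst; apply: leq_div2l; first by rewrite expn_gt0.
  by rewrite leq_pexp2l.
have Hinv : forall k, (k <= l.-1)%N -> Inv sst a0 b K (arr k).
  elim => [|k IH] Hk; first by split; [done | split; [move=> i _; done | done]].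
  apply: (pass_inv (Hrun k.+1 _)); [lia | apply: Hsst; lia | apply: IH; lia].
have HIl := Hinv l.-1 (leqnn _).
have Hpl : pass sst b 0 (arr l.-1) (arr l) := Hrun l Hl.
have HIl2 := pass_inv Hpl (leqnn _) HIl.
have HL := pass_L1 Hpl (leqnn _) HIl.
have HPW := Psi_le_W sst a0 b K sst (arr l.-1).
case: HIl => [Hsz1 [_ HW1]]; case: HIl2 => [Hsz2 _].
have Hre := rearr N (x := arr l) (y := arr l.-1) (eq_leq Hsz2) (eq_leq Hsz1).
have Hsym : L1 K (arr l) (arr l.-1) = L1 K (arr l.-1) (arr l).
  by apply: eq_bigr => i _; rewrite /ad addnC.
set E := Wsum sst a0 b K a0.
have HS : (\sum_(i < N) ad (nth 0 (type_of (arr l)) i) (nth 0 (type_of (arr l.-1)) i) <= 2 * E)%N.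
  rewrite /E -HW1; apply: leq_trans Hre _.
  change (L1 K (arr l) (arr l.-1) <= 2 * Wsum sst a0 b K (arr l.-1))%N.
  rewrite Hsym; apply: leq_trans HL _; rewrite leq_mul2l; apply/orP; right; exact: HPW.
set f := fun i => ((sst + nth 0 b i <= nth 0 a0 i) * (nth 0 a0 i - nth 0 b i))%N.
have HEE : (E <= \sum_(i < K) f i)%N.
  apply: leq_sum => i _; rewrite /inW /f.
  case: (sst + _ <= _)%N => //=.
  case: eqP => [->|] //=; by rewrite ?sub0n ?muln0 ?mul0n.
have Hs4 : 4 * INR N <= INR sst * T.
  have Hdiv : (sst * 2 ^ l = 2 ^ chopL N)%N by rewrite /sst /chopP divnK // dvdn_exp2l.
  have HNL : (N <= 2 ^ chopL N)%N by apply: up_logP.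
  have := INR_le HNL; rewrite -Hdiv mult_INR INR_expn2 => H1.
  have H2 := two_pow_le HT HlT. have H3 := pos_INR sst. nra.
set C := Rpower T c.
have HC : 0 < C by rewrite /C /Rpower; apply: exp_pos.
have HR := real_sum K (f := f) (g := fun i => (nth 0 a0 i + nth 0 b i)%N) HC.
have HR' : INR (\sum_(i < K) f i)%N * C <= 4 * INR (\sum_(i < K) (nth 0 a0 i + nth 0 b i))%N.
  apply: HR => i; rewrite /f; apply: (term_bound (N := N) (T := T)) => //.
  by rewrite /a0 H0 /b !nth_pad; exact: Hab.
have Hsum : (\sum_(i < K) (nth 0 a0 i + nth 0 b i) <= 2 * N)%N.
  rewrite big_split /=.
  have E1 : (\sum_(i < K) nth 0 a0 i = \sum_(i < K) nth 0 Astar i)%N.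
    by apply: eq_bigr => i _; rewrite /a0 H0 nth_pad.
  have E2 : (\sum_(i < K) nth 0 b i = \sum_(i < K) nth 0 Bstar i)%N.
    by apply: eq_bigr => i _; rewrite /b nth_pad.
  rewrite E1 E2.
  have := sum_nth_le Astar K; have := sum_nth_le Bstar K.
  move: HA HB => /and3P [_ _ /eqP ->] /and3P [_ _ /eqP ->]; lia.
have HSf := leq_trans HS (leq_mul (leqnn 2) HEE).
have R1 := INR_le HSf.
have R2 := INR_le Hsum.
rewrite !mult_INR in R1 R2.
have Hfin : INR (\sum_(i < K) f i)%N <= 8 * INR N / C.
  apply: (Rmult_le_reg_r C) => //.
  rewrite /Rdiv Rmult_assoc Rinv_l; last lra.
  simpl INR in R2; apply: Rle_trans HR' _.
  apply: (Rle_trans _ (4 * ((1 + 1) * INR N))); [apply: Rmult_le_compat_l; [lra | exact: R2] | lra].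
rewrite /type_dist.
change (INR (\sum_(i < N) ad (nth 0 (type_of (arr l)) i) (nth 0 (type_of (arr l.-1)) i)) / 2 <= 8 * INR N / C).
have E2 : INR 2 = 2 by rewrite /=; lra.
rewrite E2 in R1.
apply: Rle_trans _ Hfin.
apply: (Rmult_le_reg_r 2); first lra.
rewrite /Rdiv Rmult_assoc Rinv_l; last lra.
rewrite Rmult_1_r Rmult_comm; exact: R1.
Qed.
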